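(* Let $K$ be a field equipped with $m$ commuting derivations $\Delta=\{\partial_1,\ldots,\partial_m\}$, all of which are identically zero on $K$, and let $K\{y\}$ be the ring of differential polynomials in one differential indeterminate $y$. For a polynomial $g=\sum_{j}c_jX^{\alpha_j}\in K[X_1,\ldots,X_m]$ (with $c_j\in K$, $\alpha_j\in\mathbb{N}^m$), define $\tilde g=\sum_j c_j\partial^{\alpha_j}y\in K\{y\}$. Let $f,f_1,\ldots,f_r\in K[X_1,\ldots,X_m]$ with $f\in(f_1,\ldots,f_r)$, let $G=\{\tilde f_1,\ldots,\tilde f_r\}$, and let $$k=\min\Big\{\max_{1\leqslant i\leqslant r}\deg g_i \;:\; g_1,\ldots,g_r\in K[X_1,\ldots,X_m],\ f=g_1f_1+\cdots+g_rf_r\Big\}.$$ Then $\tilde f\in (G)^{(k)}$, and, if $k\geqslant 1$, $\tilde f\notin (G)^{(k-1)}$.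
   Context: For $\alpha=(\alpha_1,\ldots,\alpha_m)\in\mathbb{N}^m$, $X^\alpha=X_1^{\alpha_1}\cdots X_m^{\alpha_m}$ and $\partial^\alpha=\partial_1^{\alpha_1}\cdots\partial_m^{\alpha_m}$, whose order is $\alpha_1+\cdots+\alpha_m$. The ring $K\{y\}$ is the polynomial ring over $K$ in the variables $\partial^\alpha y$, $\alpha\in\mathbb{N}^m$, with derivations $\partial_i(\partial^\alpha y)=\partial_i\partial^\alpha y$. For a subset $G\subseteq K\{y\}$ and an integer $j\geqslant 0$, $(G)^{(j)}$ denotes the ideal generated by all $\theta g$ with $g\in G$ and $\theta=\partial^\alpha$ of order at most $j$. $\deg$ denotes total degree. *)

(* Defs.v *)
From HB Require Import structures.
From mathcomp Require Import all_boot all_order all_algebra.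
From mathcomp Require Import finmap.
From mathcomp Require Import monalg.
From mathcomp Require Import mpoly.


Set Implicit Arguments.
Unset Strict Implicit.
Unset Printing Implicit Defensive.

Import GRing.Theory.
Local Open Scope ring_scope.

(* K{y} is the polynomial ring over K in the (infinitely many) variables
   d^alpha y, alpha in N^m; alpha is represented by a monomial 'X_{1..m}
   (an m-tuple of naturals), and the ring is the monoid algebra of the
   commutative monomials over these variables (multinomials' monalg). *)

Definition Ky (K : fieldType) (m : nat) :=
  monalg.malg (monalg.cmonom 'X_{1..m}) K.

Definition yvar (K : fieldType) (m : nat) (alpha : 'X_{1..m}) : Ky K m :=
  monalg.mkmalgU (monalg.ucm alpha) 1.

(* The derivation d_i on K{y}: zero on K, d_i (d^alpha y) = d^(alpha+e_i) y,
   extended by the Leibniz rule: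
   d_i (c * prod_v v^(k v)) = c * sum_v (k v) * prod v^(k v - [v]) * d_i v. *)
Definition dder (K : fieldType) (m : nat) (i : 'I_m) (p : Ky K m) : Ky K m :=
  \sum_(k <- monalg.msupp p)
     monalg.mcoeff k p *:
       \sum_(v <- finsupp (monalg.cmonom_val k))
          ((monalg.cmonom_val k v)%:R *
           (monalg.mkmalgU (monalg.divcm k (monalg.ucm v)) 1 *
            yvar K (v + U_(i))%MM)).

Definition dpow (K : fieldType) (m : nat) (beta : 'X_{1..m}) (p : Ky K m)
  : Ky K m :=
  foldr (fun i q => iter (beta i) (dder i) q) p (enum 'I_m).

Definition tilde (K : fieldType) (m : nat) (g : mpoly m K) : Ky K m :=
  \sum_(alpha <- msupp g) monalg.mkmalgU (monalg.ucm alpha) g@_alpha.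

Definition in_ideal_gen (R : comRingType) (S : R -> Prop) (p : R) : Prop :=
  exists s : seq (R * R),
    (forall x, x \in s -> S x.2) /\ p = \sum_(x <- s) x.1 * x.2.

Definition Gj (K : fieldType) (m r : nat) (G : 'I_r -> Ky K m) (j : nat)
  : Ky K m -> Prop :=
  in_ideal_gen (fun q => exists (i : 'I_r) (beta : 'X_{1..m}),
                          (mdeg beta <= j)%N /\ q = dpow beta (G i)).

(* total degree (the zero polynomial gets degree 0) *)
Definition tdeg (K : fieldType) (m : nat) (g : mpoly m K) : nat :=
  (msize g).-1.

Definition is_combination (K : fieldType) (m r : nat)
  (f : mpoly m K) (fs : 'I_r -> mpoly m K) (g : 'I_r -> mpoly m K) :=
  f = \sum_(i < r) g i * fs i.

Definition maxdeg (K : fieldType) (m r : nat) (g : 'I_r -> mpoly m K) :=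
  (\max_(i < r) tdeg (g i))%N.

(* Main.v *)
Require Import Defs.
From HB Require Import structures.
From mathcomp Require Import all_boot all_order all_algebra.
From mathcomp Require Import finmap.
From mathcomp Require Import monalg.
From mathcomp Require Import mpoly.
Import GRing.Theory.
Local Open Scope ring_scope.
Set Implicit Arguments.
Unset Strict Implicit.

Section Lext.
Context (M : choiceType) (R : nzRingType) (V : lmodType R) (h : M -> V).
Definition lext (g : {malg R[M]}) : V :=
  \sum_(k <- monalg.msupp g) monalg.mcoeff k g *: h k.

Lemma lextw g (d : {fset M}) : (monalg.msupp g `<=` d)%fset ->
  lext g = \sum_(k <- d) monalg.mcoeff k g *: h k.
Proof.
move=> sub; rewrite /lext (big_fset_incl _ sub) // => k _ kn.
by rewrite mcoeff_outdom // scale0r.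
Qed.

Lemma lextD g1 g2 : lext (g1 + g2) = lext g1 + lext g2.
Proof.
pose d := (monalg.msupp g1 `|` monalg.msupp g2 `|` monalg.msupp (g1 + g2))%fset.
rewrite (@lextw _ d); last by rewrite /d fsubsetUr.
rewrite (@lextw g1 d); last by rewrite /d -fsetUA fsubsetUl.
rewrite (@lextw g2 d); last by rewrite /d fsetUC fsetUA fsubsetUr.
by rewrite -big_split /=; apply: eq_bigr => k _; rewrite monalg.mcoeffD scalerDl.
Qed.

Lemma lext0 : lext 0 = 0.
Proof. by rewrite /lext monalg.msupp0 big_seq_fset0. Qed.

Lemma lext_sum (I : Type) (s : seq I) (F : I -> {malg R[M]}) :
  lext (\sum_(i <- s) F i) = \sum_(i <- s) lext (F i).
Proof. exact: (big_morph _ lextD lext0). Qed.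

Lemma lextU c k : lext << c *g k >> = c *: h k.
Proof.
rewrite (@lextw _ [fset k]%fset); last exact: msuppU_le.
by rewrite big_seq_fset1 mcoeffUU.
Qed.
End Lext.

Lemma scale_malgU (M : choiceType) (R : nzRingType) (c x : R) (k : M) :
  c *: << x *g k >> = << c * x *g k >> :> {malg R[M]}.
Proof.
by apply/malgP => k'; rewrite monalg.mcoeffZ !monalg.mcoeffU mulrnAr.
Qed.

Lemma Ducm (I : choiceType) (R : nzRingType) (y : I -> {malg R[cmonom I]}) (a : I) :
  \sum_(v <- finsupp (cmonom_val (ucm a)))
     ((cmonom_val (ucm a) v)%:R * (monalg.mkmalgU (divcm (ucm a) (ucm v)) 1 * y v))
  = y a.
Proof.
rewrite mdomU big_seq_fset1 cmUU mul1r.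
have E : divcm (ucm a) (ucm a) = onecm I.
  by apply/eqP/cmP => i; rewrite divcmE onecmE subnn.
have -> : monalg.mkmalgU (divcm (ucm a) (ucm a)) (1:R) = 1 :> {malg R[cmonom I]}.
  by rewrite E.
by rewrite mul1r.
Qed.
Lemma iter0E (T : Type) (f : T -> T) x : iter 0 f x = x.
Proof. by []. Qed.

Section S.
Variables (K : fieldType) (m : nat).
Implicit Types (p q : mpoly m K).

Lemma msupp_sumw (V : zmodType) p (s : seq 'X_{1..m}) (G : 'X_{1..m} -> K -> V) :
  uniq s -> {subset msupp p <= s} -> (forall a, G a 0 = 0) ->
  \sum_(a <- msupp p) G a p@_a = \sum_(a <- s) G a p@_a.
Proof.
move=> us sub G0; rewrite [RHS](bigID (fun a => a \in msupp p)) /=.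
rewrite [X in _ + X]big1 ?addr0; last first.
  by move=> a Ha; have /eqP -> : p@_a == 0 by rewrite mcoeff_eq0.
rewrite -(big_filter s). apply: perm_big; apply: uniq_perm.
- exact: msupp_uniq.
- exact: filter_uniq.
by move=> a; rewrite mem_filter; case: (boolP (a \in msupp p)) => //= /sub.
Qed.

Definition tG (a : 'X_{1..m}) (c : K) : Ky K m := monalg.mkmalgU (ucm a) c.
Lemma tildeE p : tilde p = \sum_(a <- msupp p) tG a p@_a.
Proof. by []. Qed.

Lemma tildeD p q : tilde (p + q) = tilde p + tilde q.
Proof.
set s := undup (msupp p ++ msupp q ++ msupp (p + q)).
have us : uniq s := undup_uniq _.
have G0 : forall a, monalg.mkmalgU (ucm a) (0 : K) = 0 :> Ky K m.
  by move=> a; rewrite /tG monalgU0.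
rewrite !tildeE (@msupp_sumw _ (p+q) s tG us) //; last by move=> a h; rewrite mem_undup !mem_cat h !orbT.
rewrite (@msupp_sumw _ p s tG us) //; last by move=> a h; rewrite mem_undup !mem_cat h.
rewrite (@msupp_sumw _ q s tG us) //; last by move=> a h; rewrite mem_undup !mem_cat h !orbT.
by rewrite -big_split /=; apply: eq_bigr => a _; rewrite /tG mcoeffD monalgUD.
Qed.

Lemma tildeZ c p : tilde (c *: p) = c *: tilde p.
Proof.
have us := msupp_uniq p.
rewrite !tildeE (@msupp_sumw _ (c *: p) (msupp p) tG us) //; last first.
  by move=> a; rewrite /tG monalgU0.
  exact: msuppZ_le.
rewrite scaler_sumr; apply: eq_bigr => a _; rewrite /tG mcoeffZ.
by rewrite scale_malgU.
Qed.

Lemma tilde0 : tilde (0 : mpoly m K) = 0.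
Proof. by rewrite tildeE msupp0 big_nil. Qed.

Lemma tilde_sum (I : Type) (s : seq I) (F : I -> mpoly m K) :
  tilde (\sum_(i <- s) F i) = \sum_(i <- s) tilde (F i).
Proof. exact: (big_morph _ (@tildeD) tilde0). Qed.

Lemma tildeX c : tilde ('X_[c] : mpoly m K) = yvar K c.
Proof. by rewrite tildeE msuppX big_seq1 mcoeffX eqxx. Qed.

Definition Dk (i : 'I_m) (k : cmonom 'X_{1..m}) : Ky K m :=
  \sum_(v <- finsupp (cmonom_val k))
          ((cmonom_val k v)%:R *
           (monalg.mkmalgU (monalg.divcm k (monalg.ucm v)) 1 *
            yvar K (v + U_(i))%MM)).

Lemma dderE i (P : Ky K m) : dder i P = lext (Dk i) P.
Proof. by []. Qed.

Lemma dder_sum i (I : Type) (s : seq I) (F : I -> Ky K m) :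
  dder i (\sum_(j <- s) F j) = \sum_(j <- s) dder i (F j).
Proof. by rewrite !dderE lext_sum. Qed.

Lemma dderU i a c : dder i (tG a c) = tG (a + U_(i))%MM c.
Proof.
rewrite dderE /tG lextU /Dk Ducm /yvar scale_malgU mulr1. by [].
Qed.

Definition Sg (gamma : 'X_{1..m}) (h : mpoly m K) : Ky K m :=
  \sum_(a <- msupp h) tG (a + gamma)%MM h@_a.

Lemma dderS i gamma h : dder i (Sg gamma h) = Sg (gamma + U_(i))%MM h.
Proof. by rewrite /Sg dder_sum; apply: eq_bigr => a _; rewrite dderU addmA. Qed.

Lemma test0 i gamma h : iter 0 (dder i) (Sg gamma h) = Sg (gamma + U_(i) *+ 0)%MM h.
Proof. rewrite mulm0n (addm0 gamma) iter0E. reflexivity. Qed.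
Lemma test1 i n gamma h : iter n (dder i) (Sg gamma h) = Sg (gamma + U_(i) *+ n)%MM h ->
 iter n.+1 (dder i) (Sg gamma h) = Sg (gamma + U_(i) *+ n.+1)%MM h.
Proof. move=> IH. rewrite iterS IH dderS (mulmSr (U_(i))%MM n) (addmA gamma). reflexivity. Qed.
Lemma iter_dderS i n gamma h :
  iter n (dder i) (Sg gamma h) = Sg (gamma + U_(i) *+ n)%MM h.
Proof.
elim: n => [|n IH]; first exact: test0.
exact: test1.
Qed.
End S.



Lemma foldr0E (T U : Type) (f : T -> U -> U) x : foldr f x [::] = x.
Proof. by []. Qed.
Lemma foldrcE (T U : Type) (f : T -> U -> U) x a s : foldr f x (a :: s) = f a (foldr f x s).
Proof. by []. Qed.

Section S.
Variables (K : fieldType) (m : nat).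
Implicit Types (p q h : mpoly m K).
Lemma foldS (s : seq 'I_m) (beta : 'X_{1..m}) gamma h :
  foldr (fun i Q => iter (beta i) (dder i) Q) (Sg gamma h) s
  = Sg (gamma + \sum_(i <- s) U_(i) *+ beta i)%MM h.
Proof.
elim: s => [|x s IH].
  rewrite big_nil (addm0 gamma) foldr0E. reflexivity.
rewrite foldrcE IH iter_dderS big_cons (addmC (U_(x) *+ beta x)%MM) (addmA gamma).
reflexivity.
Qed.

Lemma tildeSg h : tilde h = Sg 0%MM h.
Proof. rewrite tildeE /Sg; apply: eq_bigr => a _; rewrite (addm0 a). reflexivity. Qed.

Lemma sumU (beta : 'X_{1..m}) : (\sum_(i <- enum 'I_m) U_(i) *+ beta i)%MM = beta.
Proof.
apply/mnmP => j; rewrite mnm_sumE.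
rewrite {2}(multinomUE_id beta) mnm_sumE big_enum /=.
by apply: eq_bigr => i _.
Qed.

Lemma dpowS beta h : dpow beta (tilde h) = Sg beta h.
Proof.
rewrite /dpow tildeSg foldS add0m sumU. reflexivity.
Qed.

Lemma tildeXM beta h : tilde ('X_[beta] * h) = Sg beta h.
Proof.
rewrite {1}(mpolyE h) mulr_sumr tilde_sum /Sg; apply: eq_bigr => a _.
rewrite -scalerAr -mpolyXD tildeZ tildeX /yvar /tG scale_malgU mulr1 (addmC beta a).
reflexivity.
Qed.
End S.



Section Lin.
Context (I : choiceType) (R : comNzRingType) (V : lmodType R) (X : I -> V).
Definition Lk (k : cmonom I) : V :=
  if monalg.mdeg k == 1%N then \sum_(a <- finsupp (cmonom_val k)) X a else 0.
Definition lin := lext Lk.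

Lemma linU c a : lin << c *g ucm a >> = c *: X a.
Proof.
rewrite /lin lextU /Lk mdegU eqxx mdomU big_seq_fset1. by [].
Qed.

Lemma linM (A : {malg R[cmonom I]}) c a : lin (A * << c *g ucm a >>) = (monalg.mcoeff (mone : cmonom I) A * c) *: X a.
Proof.
rewrite {1}(monalgE A) mulr_suml /lin lext_sum.
have E k : lext Lk (<< monalg.mcoeff k A *g k >> * << c *g ucm a >>)
    = ((monalg.mcoeff k A * c) *+ (k == (mone : cmonom I))) *: X a.
  rewrite malgM_def fgmulUU lextU /Lk mdegM mdegU addn1 eqSS monalg.mdeg_eq0.
  case: eqP => [->|_]; last by rewrite scaler0 mulr0n scale0r.
  by rewrite monalg.mul1m mdomU big_seq_fset1 mulr1n.
rewrite (eq_bigr _ (fun k _ => E k)) -scaler_suml; congr (_ *: _).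
rewrite [in RHS](monalgE A).
rewrite (big_morph _ (monalg.mcoeffD _) (monalg.mcoeff0 _)) mulr_suml.
by apply: eq_bigr => k _; rewrite monalg.mcoeffU mulrnAl.
Qed.
End Lin.



Section Ideal.
Context (R : comRingType) (S : R -> Prop).
Lemma ideal0 : in_ideal_gen S 0.
Proof. by exists [::]; split => //; rewrite big_nil. Qed.
Lemma idealD p q : in_ideal_gen S p -> in_ideal_gen S q -> in_ideal_gen S (p + q).
Proof.
move=> [s1 [h1 ->]] [s2 [h2 ->]]; exists (s1 ++ s2); split; last by rewrite big_cat.
by move=> x; rewrite mem_cat => /orP[/h1|/h2].
Qed.
Lemma idealM a x : S x -> in_ideal_gen S (a * x).
Proof. by move=> Sx; exists [:: (a, x)]; split; [move=> y; rewrite inE => /eqP -> | rewrite big_seq1]. Qed.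
End Ideal.

Section P.
Variables (K : fieldType) (m : nat).
Implicit Types (p q h : mpoly m K).

Lemma dpowX beta h : dpow beta (tilde h) = tilde ('X_[beta] * h).
Proof. by rewrite dpowS tildeXM. Qed.

Definition linK : Ky K m -> mpoly m K := lin (fun a => 'X_[a]).

Lemma linK_tilde h : linK (tilde h) = h.
Proof.
rewrite tildeE /linK /lin lext_sum [RHS](mpolyE h); apply: eq_bigr => a _.
by rewrite /tG; exact: linU.
Qed.

Lemma linK_M (A : Ky K m) h : linK (A * tilde h) = monalg.mcoeff mone A *: h.
Proof.
rewrite tildeE mulr_sumr /linK /lin lext_sum [in RHS](mpolyE h) scaler_sumr.
apply: eq_bigr => a _.
by rewrite /tG scalerA; exact: linM.
Qed.

Lemma tdeg_le p j : (tdeg p <= j)%N = (msize p <= j.+1)%N.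
Proof. by rewrite /tdeg; case: (msize p). Qed.
End P.



Section Q.
Variables (K : fieldType) (m : nat).

Lemma part1 (r j : nat) (fs : 'I_r -> mpoly m K) (g : 'I_r -> mpoly m K) :
  (forall i, (tdeg (g i) <= j)%N) ->
  Gj (fun i => tilde (fs i)) j (tilde (\sum_i g i * fs i)).
Proof.
move=> hg; rewrite tilde_sum.
apply: (big_ind (Gj _ j)); [exact: ideal0 | exact: idealD | move=> i _].
rewrite {1}(mpolyE (g i)) mulr_suml tilde_sum big_seq.
apply: (big_ind (Gj _ j)); [exact: ideal0 | exact: idealD | move=> a ha].
rewrite -(scalerAl ((g i)@_a)) tildeZ -dpowX.
rewrite -(mul1r (dpow a (tilde (fs i)))) (scalerAl ((g i)@_a)).
apply: idealM; exists i, a; split => //.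
have h2 := msize_mdeg_lt ha; move: (hg i); rewrite tdeg_le => h1.
by rewrite -ltnS (leq_trans h2 h1).
Qed.

Lemma part2 r j (fs : 'I_r -> mpoly m K) (s : seq (Ky K m * Ky K m)) :
  (forall x, x \in s -> exists (i : 'I_r) (beta : 'X_{1..m}),
        (mdeg beta <= j)%N /\ x.2 = dpow beta (tilde (fs i))) ->
  exists g : 'I_r -> mpoly m K, (forall i, (tdeg (g i) <= j)%N) /\
     linK (\sum_(x <- s) x.1 * x.2) = \sum_i g i * fs i.
Proof.
elim: s => [|x s IH] hs.
  exists (fun _ => 0); split; first by move=> i; rewrite tdeg_le msize0.
  rewrite big_nil big1 /linK /lin ?lext0 // => i _; by rewrite mul0r.
have [g [hg e]] : exists g : 'I_r -> mpoly m K, (forall i, (tdeg (g i) <= j)%N) /\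
     linK (\sum_(x <- s) x.1 * x.2) = \sum_i g i * fs i.
  by apply: IH => y hy; apply: hs; rewrite inE hy orbT.
have [i0 [beta [hb ex]]] := hs x (mem_head _ _).
exists (fun i => g i + (if i == i0 then monalg.mcoeff mone x.1 *: 'X_[beta] else 0)).
split.
  move=> i; rewrite tdeg_le; apply: leq_trans (msizeD_le _ _) _.
  rewrite geq_max -tdeg_le hg /=; case: eqP => _; last by rewrite msize0.
  by apply: leq_trans (msizeZ_le _ _) _; rewrite msizeX ltnS.
rewrite big_cons /linK /lin lextD.
rewrite /linK /lin in e; rewrite e ex dpowX.
have := linK_M x.1 ('X_[beta] * fs i0); rewrite /linK /lin => ->.
rewrite [RHS](eq_bigr _ (fun i _ => mulrDl _ _ _)) big_split /= addrC; congr (_ + _).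
rewrite (bigD1 i0) //= eqxx big1 ?addr0 => [|i /negbTE ->]; first by rewrite scalerAl.
by rewrite mul0r.
Qed.
End Q.

Theorem theorem4p3 (K : fieldType) (m r : nat)
  (f : mpoly m K) (fs : 'I_r -> mpoly m K) (k : nat) :
  (* f lies in the ideal (f_1, ..., f_r) *)
  (exists g : 'I_r -> mpoly m K, is_combination f fs g) ->
  (* k is the minimum of max_i deg g_i over all representations *)
  (exists g : 'I_r -> mpoly m K, is_combination f fs g /\ maxdeg g = k) ->
  (forall g : 'I_r -> mpoly m K, is_combination f fs g -> (k <= maxdeg g)%N) ->
  Gj (fun i => tilde (fs i)) k (tilde f) /\
  ((1 <= k)%N -> ~ Gj (fun i => tilde (fs i)) k.-1 (tilde f)).
Proof.
move=> _ [g [hc hk]] hmin; split.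
  rewrite hc; apply: part1 => i; rewrite -hk /maxdeg.
  exact: (leq_bigmax (F := fun i0 => tdeg (g i0)) i).
move=> k1 [s [hs e]].
have [g' [hg' e']] := part2 hs.
rewrite -e linK_tilde in e'.
have := hmin g' e'.
have : (maxdeg g' <= k.-1)%N by apply/bigmax_leqP => i _; exact: hg'.
move=> h1 h2; have := leq_trans h2 h1.
by case: (k) k1 => // k' _ /=; rewrite ltnn.
Qed.
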